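(* Let $G$ and $H$ be two vertex-disjoint graphs and $u\in V(G)$. Then $\gamma_{gr}(G_{u\hookleftarrow H})=\max \{\gamma_{gr}(G),\ \gamma_{gr}^u(G)+\gamma_{gr}(H)-1\}$.
   Context: All graphs are finite and simple; $N[v]$ is the closed neighborhood. $G_{u\hookleftarrow H}$ is the graph obtained from $G$ by replacing $u$ by $H$: vertex set $(V(G)\setminus\{u\})\cup V(H)$, edges those of $G-u$, those of $H$, and all edges joining a vertex of $V(H)$ to a vertex of $N(u)$. For a sequence $S=(v_1,\dots,v_k)$ of distinct vertices, $\widehat S=\{v_1,\dots,v_k\}$, $|S|=k$, $PN_S(v_i)=N[v_i]\setminus\bigcup_{j<i}N[v_j]$. $S$ is a legal dominating sequence if $\widehat S$ is dominating and each $PN_S(v_i)\ne\emptyset$; $\gamma_{gr}(G)$ is the maximum length of such a sequence. For such $S$, the footprinter $f_S(x)$ of $x$ is the unique $v\in\widehat S$ with $x\in PN_S(v)$, and $I_S=\{v:f_S(v)=v\}$. For an independent set $I$, $\gamma_{gr}(G,I)$ is the maximum length of a legal dominating sequence $S$ of $G$ with $I_S=I$ ($-\infty$ if there is none), and $\gamma^u_{gr}(G)=\max\{\gamma_{gr}(G,I): I \text{ independent set of } G,\ u\in I\}$. *)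

(* Defs.v *)
(* Finite simple graphs are symmetric irreflexive relations
   e : rel T on a finType T (vertex set = T). *)
From mathcomp Require Import all_boot.
Set Implicit Arguments. Unset Strict Implicit. Unset Printing Implicit Defensive.

Section Grundy.
Variables (T : finType) (e : rel T).

Definition cnbhd (v : T) : {set T} := [set w | (w == v) || e v w].

Definition pn (s : seq T) (v : T) : {set T} :=
  cnbhd v :\: \bigcup_(w <- take (index v s) s) cnbhd w.

Definition dominating_seq (s : seq T) : bool :=
  \bigcup_(w <- s) cnbhd w == [set: T].

Definition legal_dom (s : seq T) : bool :=
  [&& uniq s, all (fun v => pn s v != set0) s & dominating_seq s].

(* I_S = {v : f_S(v) = v} = {v in S : v in PN_S(v)} *)
Definition IS (s : seq T) : {set T} := [set v | (v \in s) && (v \in pn s v)].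

Definition independent (I : {set T}) : bool :=
  [forall x in I, forall y in I, ~~ e x y].

(* Grundy domination number: maximum length of a legal dominating sequence
   (lengths are bounded by #|T| since entries are distinct). *)
Definition gamma_gr : nat :=
  \max_(k < #|T|.+1 | [exists t : k.-tuple T, legal_dom t]) k.

(* gamma_gr^u(G) = max over independent I with u in I of gamma_gr(G, I),
   where gamma_gr(G, I) = max length of legal dominating S with I_S = I
   (-oo if none).  Unfolding the double maximum: the maximum length of a
   legal dominating sequence S whose I_S is independent and contains u. *)
Definition gamma_gr_u (u : T) : nat :=
  \max_(k < #|T|.+1 | [exists t : k.-tuple T,
           [&& legal_dom t, independent (IS t) & u \in IS t]]) k.
End Grundy.

Definition repl_vert (TG TH : finType) (u : TG) : finType :=
  ({x : TG | x != u} + TH)%type.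

Definition repl (TG TH : finType) (eG : rel TG) (u : TG) (eH : rel TH)
  : rel (repl_vert TH u) :=
  fun a b =>
    match a, b with
    | inl x, inl y => eG (val x) (val y)
    | inr x, inr y => eH x y
    | inl x, inr _ => eG (val x) u
    | inr _, inl y => eG u (val y)
    end.
Arguments repl [TG TH] eG u eH _ _.

(* Main.v *)
Require Import Defs.
From mathcomp Require Import all_boot zify.
Set Implicit Arguments. Unset Strict Implicit. Unset Printing Implicit Defensive.

Fixpoint lgsP (T : finType) (P : {set T} -> T -> bool) (U : {set T}) (s : seq T) : bool :=
  if s is x :: s' then P U x && lgsP P (x |: U) s' else true.

Lemma lgsP_cat (T : finType) P (U : {set T}) s t :
  lgsP P U (s ++ t) = lgsP P U s && lgsP P (U :|: [set x in s]) t.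
Proof.
elim: s U => [|x s IH] U /=.
  by congr lgsP; apply/setP => z; rewrite !inE orbF.
rewrite IH andbA; congr (_ && lgsP _ _ _).
by apply/setP => z; rewrite !inE; case: (z == x); rewrite ?orbT //= orbF.
Qed.

Lemma sim (T1 T2 : finType) (P1 : {set T1} -> T1 -> bool)
  (P2 : {set T2} -> T2 -> bool) (f : T1 -> option T2)
  (Inv : {set T1} -> {set T2} -> Prop) s :
  (forall U1 U2 x, x \in s -> Inv U1 U2 -> P1 U1 x ->
     if f x is Some y then P2 U2 y /\ Inv (x |: U1) (y |: U2)
     else Inv (x |: U1) U2) ->
  forall U1 U2, Inv U1 U2 -> lgsP P1 U1 s -> lgsP P2 U2 (pmap f s).
Proof.
elim: s => [//|x s IH] H U1 U2 I /= /andP[Px Ps].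
have H' : forall U1 U2 y, y \in s -> Inv U1 U2 -> P1 U1 y ->
     if f y is Some z then P2 U2 z /\ Inv (y |: U1) (z |: U2)
     else Inv (y |: U1) U2.
  by move=> V1 V2 y ys; apply: H; rewrite inE ys orbT ?orbT //.
have := H U1 U2 x (mem_head _ _) I Px.
case: (f x) => [y [P2y I']|I'] /=; last exact: IH H' _ _ I' Ps.
by rewrite P2y /=; exact: IH H' _ _ I' Ps.
Qed.

Lemma lgsP_all (T : finType) (P : {set T} -> T -> bool) (Q : pred T)
  (Inv : {set T} -> Prop) s :
  (forall U x, x \in s -> Inv U -> P U x -> Q x /\ Inv (x |: U)) ->
  forall U, Inv U -> lgsP P U s -> all Q s.
Proof.
elim: s => [//|x s IH] H U I /= /andP[Px Ps].
have [Qx I'] := H U x (mem_head _ _) I Px.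
rewrite Qx /=; apply: (IH _ _ I' Ps) => V y ys; apply: H; rewrite inE ys orbT ?orbT //.
Qed.

Section Gen.
Variables (T : finType) (e : rel T).

Definition D (U : {set T}) : {set T} := \bigcup_(w in U) cnbhd e w.
Definition lstep (U : {set T}) (x : T) : bool :=
  (x \notin U) && ~~ (cnbhd e x \subset D U).
Definition lgs := lgsP lstep.

Lemma cnbhd_refl x : x \in cnbhd e x.
Proof. by rewrite inE eqxx. Qed.

Lemma Dmono (A B : {set T}) : A \subset B -> D A \subset D B.
Proof.
move=> /subsetP AB; apply/subsetP => z /bigcupP [w wA zw].
by apply/bigcupP; exists w => //; apply: AB.
Qed.

Lemma subD (A : {set T}) : A \subset D A.
Proof. by apply/subsetP => z zA; apply/bigcupP; exists z => //; apply: cnbhd_refl. Qed.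

Lemma Dseq s : \bigcup_(w <- s) cnbhd e w = D [set x in s].
Proof.
rewrite bigcup_seq /D; apply: eq_bigl => z; by rewrite inE.
Qed.

Lemma pn_rcons p x v : v \in p -> pn e (rcons p x) v = pn e p v.
Proof.
move=> vp; rewrite /pn -cats1 index_cat vp takel_cat //.
by rewrite index_size.
Qed.

Lemma legal_lgs s : (uniq s && all (fun v => pn e s v != set0) s) = lgs set0 s.
Proof.
elim/last_ind: s => [//|p x IH].
rewrite /lgs -cats1 lgsP_cat /= -/(lgs _ _) -IH cats1 rcons_uniq all_rcons set0U andbT.
case xp: (x \in p) => /=; first by rewrite /lstep inE xp /= !andbF.
rewrite (@eq_in_all _ (fun v => pn e (rcons p x) v != set0) (fun v => pn e p v != set0)); last first.
  by move=> v vp /=; rewrite pn_rcons.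
have -> : pn e (rcons p x) x = cnbhd e x :\: D [set y in p].
  by rewrite /pn -cats1 index_cat xp /= eqxx addn0 take_size_cat // Dseq.
rewrite setD_eq0 /lstep inE xp /=.
by case: (uniq p); case: (all _ _); case: (_ \subset _).
Qed.

Lemma legal_dom_lgs s :
  legal_dom e s = lgs set0 s && (D [set x in s] == setT).
Proof. by rewrite /legal_dom andbA legal_lgs /dominating_seq Dseq. Qed.

Lemma ext_aux n : forall s, #|~: D [set x in s]| <= n -> lgs set0 s ->
  exists c, legal_dom e (s ++ c).
Proof.
elim: n => [|n IH] s.
  rewrite leqn0 cards_eq0 => /eqP Ds ls; exists [::].
  rewrite cats0 legal_dom_lgs ls /=; apply/eqP/setP => z; rewrite inE.
  by apply/negPn; rewrite -in_setC Ds inE.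
move=> Hn ls.
case Ds: (D [set x in s] == setT).
  by exists [::]; rewrite cats0 legal_dom_lgs ls Ds.
have [x xD] : exists x, x \notin D [set x in s].
  apply/existsP; rewrite -negb_forall; apply/negP => /forallP H.
  by move/negP: Ds; apply; apply/eqP/setP => z; rewrite inE H.
have ls' : lgs set0 (rcons s x).
  rewrite /lgs -cats1 lgsP_cat -/(lgs _ _) ls /= set0U andbT /lstep.
  apply/andP; split.
    by apply: contra xD; apply: (subsetP (subD _)).
  by apply/subsetPn; exists x => //; apply: cnbhd_refl.
have [c Hc] : exists c, legal_dom e (rcons s x ++ c).
  apply: IH ls'; rewrite -ltnS; apply: leq_trans Hn.
  apply: proper_card; rewrite properEneq; apply/andP; split.
    apply/negP => /eqP E; have : x \in ~: D [set y in s] by rewrite inE.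
    rewrite -E inE => /negP; apply; apply/bigcupP; exists x; last exact: cnbhd_refl.
    by rewrite inE mem_rcons mem_head.
  by rewrite setCS; apply: Dmono; apply/subsetP => z; rewrite !inE mem_rcons inE orbC => ->.
by exists (x :: c); rewrite -cat_rcons.
Qed.

Lemma ext s : lgs set0 s -> exists c, legal_dom e (s ++ c).
Proof. exact: ext_aux. Qed.

Lemma lgs_notin U s x : lgs U s -> x \in s -> x \notin U.
Proof.
elim: s U => //= y s IH U /andP[/andP[yU _] ls]; rewrite inE => /orP[/eqP->//|xs].
by have := IH _ ls xs; rewrite inE negb_or => /andP[_ ->].
Qed.

Lemma lgs_uniq U s : lgs U s -> uniq s.
Proof.
elim: s U => [//|x s IH] U /= /andP[_ ls]; rewrite (IH _ ls) andbT.
by apply/negP => xs; have := lgs_notin ls xs; rewrite !inE eqxx.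
Qed.

Lemma legal_size s : legal_dom e s -> size s < #|T|.+1.
Proof.
rewrite legal_dom_lgs => /andP[/lgs_uniq us _].
by rewrite ltnS -(card_uniqP us) max_card.
Qed.

Lemma gamma_ge s : lgs set0 s -> size s <= gamma_gr e.
Proof.
move=> /ext [c Hc]; apply: (@leq_trans (size (s ++ c))); first by rewrite size_cat leq_addr.
have Hs := legal_size Hc.
apply: (@leq_bigmax_cond _ _ (fun k : 'I_#|T|.+1 => nat_of_ord k) (Ordinal Hs)).
by apply/existsP; exists (in_tuple (s ++ c)).
Qed.

Lemma gamma_le M : (forall s, legal_dom e s -> size s <= M) -> gamma_gr e <= M.
Proof.
move=> H; apply/bigmax_leqP => k /existsP [t lt].
by have := H _ lt; rewrite size_tuple.
Qed.


Lemma IS_indep : symmetric e -> irreflexive e -> forall t, independent e (IS e t).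
Proof.
move=> sym irr t.
have key : forall x y, x \in IS e t -> y \in IS e t -> index x t < index y t -> ~~ e x y.
  move=> x y; rewrite !inE => /andP[xt _] /andP[yt ypn] lt; apply/negP => exy.
  move: ypn; rewrite bigcup_seq => /andP[/negP H _]; apply: H; apply/bigcupP.
  exists x; first by rewrite (in_take _ xt).
  by rewrite inE exy orbT.
apply/forallP => x; apply/implyP => xI; apply/forallP => y; apply/implyP => yI.
case: (ltngtP (index x t) (index y t)) => H; first exact: key.
  by rewrite sym; apply: key.
have xt : x \in t by move: xI; rewrite inE => /andP[].
have yt : y \in t by move: yI; rewrite inE => /andP[].
have -> : y = x by rewrite -(nth_index x yt) -H nth_index.
by rewrite irr.
Qed.

Lemma gamma_u_ge u a b : symmetric e -> irreflexive e ->
  lgs set0 (a ++ u :: b) -> u \notin D [set x in a] ->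
  size (a ++ u :: b) <= gamma_gr_u e u.
Proof.
move=> sym irr ls uD; have [c Hc] := ext ls.
have Hs := legal_size Hc.
apply: (@leq_trans (size ((a ++ u :: b) ++ c))); first by rewrite [X in _ <= X]size_cat leq_addr.
apply: (@leq_bigmax_cond _ _ (fun k : 'I_#|T|.+1 => nat_of_ord k) (Ordinal Hs)).
apply/existsP; exists (in_tuple ((a ++ u :: b) ++ c)) => /=.
rewrite Hc IS_indep //= inE -catA /= mem_cat mem_head orbT /=.
have ua : u \notin a.
  move: ls; rewrite /lgs lgsP_cat /= set0U => /andP[_ /andP[/andP[+ _] _]].
  by rewrite inE.
by rewrite /pn (index_pivot (b ++ c) ua) take_size_cat // inE cnbhd_refl andbT Dseq.
Qed.

Lemma gamma_u_le u M :
  (forall a b, lgs set0 (a ++ u :: b) -> u \notin D [set x in a] ->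
     size (a ++ u :: b) <= M) -> gamma_gr_u e u <= M.
Proof.
move=> H; apply/bigmax_leqP => k /existsP [t /and3P[lt _ ut]].
rewrite -(size_tuple t).
move: ut; rewrite inE => /andP[ut upn].
set a := take (index u t) t; set b := drop (index u t).+1 t.
have ua : u \notin a by rewrite /a (in_take _ ut) ltnn.
have E : (t : seq T) = a ++ u :: b by rewrite /a /b -drop_index // cat_take_drop.
rewrite E; move: lt upn; rewrite E legal_dom_lgs => /andP[ls _].
rewrite /pn (index_pivot b ua) take_size_cat // Dseq inE cnbhd_refl andbT => uD.
exact: H.
Qed.

End Gen.

Set Implicit Arguments. Unset Strict Implicit. Unset Printing Implicit Defensive.

Lemma split_first (T : Type) (P : pred T) s : has P s ->
  exists p x q, [/\ s = p ++ x :: q, P x & ~~ has P p].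
Proof.
elim: s => //= x s IH /orP[Px|hs]; first by exists [::], x, s.
case: (boolP (P x)) => Px; first by exists [::], x, s.
have [p [y [q [-> Py np]]]] := IH hs.
by exists (x :: p), y, q; rewrite /= (negbTE Px).
Qed.

Section Repl.
Variables (TG TH : finType) (eG : rel TG) (eH : rel TH) (u : TG).
Local Notation V := (repl_vert TH u).
Local Notation e' := (repl eG u eH).

Definition phi (a : V) : TG := match a with inl y => val y | inr _ => u end.
Definition isl (a : V) : bool := if a is inl _ then true else false.
Definition noinr (U : {set V}) := forall a, a \in U -> isl a.
Definition domH (U : {set V}) := exists y, inl y \in U /\ eG (val y) u.
Definition getl (a : V) : option TG := if a is inl y then Some (val y) else None.
Definition getr (a : V) : option TH := if a is inr h then Some h else None.

Lemma N_ll (y z : {x : TG | x != u}) :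
  (inl z \in cnbhd e' (inl y)) = (val z \in cnbhd eG (val y)).
Proof. by rewrite !inE. Qed.
Lemma N_lr y (h : TH) : (inr h \in cnbhd e' (inl y)) = eG (val y) u.
Proof. by rewrite !inE. Qed.
Lemma N_rl (h : TH) z : (inl z \in cnbhd e' (inr h)) = eG u (val z).
Proof. by rewrite !inE. Qed.
Lemma N_rr (h h' : TH) : (inr h' \in cnbhd e' (inr h)) = (h' \in cnbhd eH h).
Proof. by rewrite !inE. Qed.


Lemma neqU (z : {x : TG | x != u}) : (val z == u) = false.
Proof. by apply/negbTE; case: z. Qed.

Lemma K (a b : V) : a \in cnbhd e' b -> phi a \in cnbhd eG (phi b).
Proof.
case: a => [z|h]; case: b => [y|h'] /=.
- by rewrite N_ll.
- by rewrite N_rl inE => ->; rewrite orbT.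
- by rewrite N_lr inE => ->; rewrite orbT.
- by rewrite cnbhd_refl.
Qed.

Lemma K3 (a b : V) : phi a \in cnbhd eG (phi b) -> isl a || isl b ->
  a \in cnbhd e' b.
Proof.
case: a => [z|h]; case: b => [y|h'] //=.
- by rewrite N_ll.
- by rewrite N_rl inE neqU.
- by rewrite N_lr inE eq_sym neqU.
Qed.

Lemma DK (a : V) (U : {set V}) : a \in D e' U -> phi a \in D eG (phi @: U).
Proof.
move=> /bigcupP [b bU ab]; apply/bigcupP; exists (phi b); first exact: imset_f.
exact: K.
Qed.

Lemma DK3 (a : V) (U : {set V}) : phi a \in D eG (phi @: U) -> isl a \/ noinr U ->
  a \in D e' U.
Proof.
move=> /bigcupP [z /imsetP [b bU ->] ab] H; apply/bigcupP; exists b => //.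
apply: K3 => //; case: H => [->//|H]; by rewrite (H b bU) orbT.
Qed.

Variable h0 : TH.
Definition g (x : TG) : V := if insub x is Some y then inl y else inr h0.
Lemma phig x : phi (g x) = x.
Proof. by rewrite /g; case: insubP => [y _ <-|/negPn/eqP->]. Qed.

Lemma K2 (b : V) w : w \in cnbhd eG (phi b) -> exists a, phi a = w /\ a \in cnbhd e' b.
Proof.
move=> wN.
case: b wN => [y|h] /= wN.
  exists (g w); split; first exact: phig.
  by apply: K3; [rewrite phig | rewrite /= orbT].
case wu: (w == u).
  by exists (inr h); rewrite (eqP wu) cnbhd_refl.
exists (g w); split; first exact: phig.
by rewrite /g; case: insubP => [y _ yw|]; [apply: K3; rewrite //= yw | rewrite wu].
Qed.

Lemma FS (U' : {set V}) (U : {set TG}) (b : V) : phi @: U' \subset U -> lstep eG U (phi b) -> lstep e' U' b.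
Proof.
move=> sub /andP[bU /subsetPn [w wN wD]]; apply/andP; split.
  by apply: contra bU => bU'; apply: (subsetP sub); apply: imset_f.
have [a [aw aN]] := K2 wN.
apply/subsetPn; exists a => //; apply: contra wD => aD.
by rewrite -aw; apply: (subsetP (Dmono eG sub)); apply: DK.
Qed.

Lemma BS0 (U' : {set V}) (U : {set TG}) (b : V) : noinr U' -> U \subset phi @: U' -> lstep e' U' b ->
  lstep eG U (phi b).
Proof.
move=> ni sub /andP[bU /subsetPn [a aN aD]]; apply/andP; split.
  apply/negP => /(subsetP sub) /imsetP [c cU E].
  have := ni c cU; case: c cU E => // z zU; case: b bU aN => [y|h] bU aN /= E.
    by move: bU; rewrite (val_inj E) zU.
  by move: (valP z); rewrite /= -E eqxx.
apply/subsetPn; exists (phi a); first exact: K.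
apply: contra aD => aD; apply: DK3; [exact: (subsetP (Dmono eG sub)) | by right].
Qed.

Lemma BS1 (U' : {set V}) (U : {set TG}) (x w : {x : TG | x != u}) : U \subset phi @: U' ->
  inl x \notin U' -> inl w \in cnbhd e' (inl x) -> (inl w : V) \notin D e' U' ->
  lstep eG U (val x).
Proof.
move=> sub xU wN wD; apply/andP; split.
  apply/negP => /(subsetP sub) /imsetP [c cU E].
  case: c cU E => [z|h] cU /= E.
    by move: xU; rewrite (val_inj E) cU.
  by move: (valP x); rewrite /= E eqxx.
apply/subsetPn; exists (val w); first by rewrite -N_ll.
apply: contra wD => wD; apply: DK3; [exact: (subsetP (Dmono eG sub)) | by left].
Qed.


Definition rpart (U : {set V}) : {set TH} := [set h | inr h \in U].

Lemma HF (U' : {set V}) (W : {set TH}) h : rpart U' \subset W -> ~ domH U' ->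
  lstep eH W h -> lstep e' U' (inr h).
Proof.
move=> sub nd /andP[hW /subsetPn [w wN wD]]; apply/andP; split.
  by apply: contra hW => hU; apply: (subsetP sub); rewrite inE.
apply/subsetPn; exists (inr w); first by rewrite N_rr.
apply/negP => /bigcupP [[y|h'] yU].
  by rewrite N_lr => ey; apply: nd; exists y.
rewrite N_rr => wh; move/negP: wD; apply; apply/bigcupP; exists h' => //.
by apply: (subsetP sub); rewrite inE.
Qed.

Lemma HBd (U' : {set V}) (W : {set TH}) w : W \subset rpart U' ->
  (inr w : V) \notin D e' U' -> w \notin D eH W.
Proof.
move=> sub wD; apply: contra wD => /bigcupP [h hW wh]; apply/bigcupP; exists (inr h).
  by move: (subsetP sub _ hW); rewrite inE.
by rewrite N_rr.
Qed.

Lemma HB' (U' : {set V}) (W : {set TH}) w : W \subset rpart U' ->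
  (inr w : V) \notin D e' U' -> lstep eH W w.
Proof.
move=> sub wD; apply/andP; split.
  apply: contra wD => /(subsetP sub); rewrite inE => wU.
  by apply/bigcupP; exists (inr w) => //; apply: cnbhd_refl.
apply/subsetPn; exists w; first exact: cnbhd_refl.
apply: contra wD => /bigcupP [h hW wh]; apply/bigcupP; exists (inr h).
  by move: (subsetP sub _ hW); rewrite inE.
by rewrite N_rr.
Qed.

Lemma HB (U' : {set V}) (W : {set TH}) h : W \subset rpart U' ->
  lstep e' U' (inr h) -> lstep eH W h.
Proof.
move=> sub /andP[hU /subsetPn [a aN aD]].
case: (pickP (fun h' => inr h' \in U')) => [h' h'U|nor].
  case: a aN aD => [z|w] aN aD.
    move/negP: aD; case; apply/bigcupP; exists (inr h') => //.
    by move: aN; rewrite !N_rl.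
  apply/andP; split.
    by apply: contra hU => /(subsetP sub); rewrite inE.
  by apply/subsetPn; exists w; [rewrite -N_rr | apply: HBd sub aD].
have W0 : W = set0.
  apply/setP => z; rewrite inE; apply/negP => /(subsetP sub); rewrite inE nor //.
rewrite W0; apply/andP; split; first by rewrite inE.
apply/subsetPn; exists h; first exact: cnbhd_refl.
by apply/negP => /bigcupP [? ]; rewrite inE.
Qed.

Lemma Q1 (U' : {set V}) x : ~~ eG (val x) u -> lstep e' U' (inl x) ->
  exists w, inl w \in cnbhd e' (inl x) /\ (inl w : V) \notin D e' U'.
Proof.
move=> nx /andP[_ /subsetPn [[w|h] aN aD]]; first by exists w.
by move: aN; rewrite N_lr (negbTE nx).
Qed.

Lemma Q2 (U' : {set V}) b : domH U' -> (exists h, inr h \in U') -> lstep e' U' b ->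
  exists x, b = inl x /\ exists w, inl w \in cnbhd e' (inl x) /\ (inl w : V) \notin D e' U'.
Proof.
move=> [y [yU yu]] [h hU] /andP[_ /subsetPn [a aN aD]].
case: a aN aD => [w|w] aN aD; last first.
  by move/negP: aD; case; apply/bigcupP; exists (inl y); rewrite // N_lr.
case: b aN => [x|h'] aN; first by exists x; split => //; exists w.
move/negP: aD; case; apply/bigcupP; exists (inr h) => //.
by move: aN; rewrite !N_rl.
Qed.

Lemma Wit (U' : {set V}) b : lstep e' U' b ->
  (exists w, inl w \in cnbhd e' b /\ (inl w : V) \notin D e' U') \/
  (exists w, inr w \in cnbhd e' b /\ (inr w : V) \notin D e' U').
Proof.
by move=> /andP[_ /subsetPn [[w|w] aN aD]]; [left|right]; exists w.
Qed.


Definition adj (a : V) : bool := if a is inl y then eG (val y) u else false.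

Lemma SegG0 s : all isl s -> forall (U' : {set V}) (U : {set TG}), noinr U' ->
  U \subset phi @: U' -> lgs e' U' s -> lgs eG U (pmap getl s).
Proof.
move=> al U' U ni sub ls.
apply: (@sim _ _ _ _ getl (fun U' U => noinr U' /\ U \subset phi @: U') s _ U' U (conj ni sub) ls).
move=> V' W' a as' [n1 s1] st.
have := allP al a as'; case: a as' st => [y|//] _ st _ /=; split.
  by have := BS0 n1 s1 st.
split; first by move=> c; rewrite !inE => /orP[/eqP->//|]; apply: n1.
by rewrite imsetU1 setUS.
Qed.

Lemma SegG1 s : all (predC adj) s -> forall (U' : {set V}) (U : {set TG}),
  U \subset phi @: U' -> lgs e' U' s -> lgs eG U (pmap getl s).
Proof.
move=> al U' U sub ls.
apply: (@sim _ _ _ _ getl (fun U' U => U \subset phi @: U') s _ U' U sub ls).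
move=> V' W' a as' s1 st.
have := allP al a as'; case: a as' st => [y|h] _ st na /=.
  split; last by rewrite imsetU1 setUS.
  have [w [wN wD]] := Q1 na st.
  by apply: BS1 s1 _ wN wD; case/andP: st.
by apply: (subset_trans s1); apply: imsetS; apply: subsetUr.
Qed.

Lemma SegG2 s : forall (U' : {set V}) (U : {set TG}), domH U' -> (exists h, inr h \in U') ->
  U \subset phi @: U' -> lgs e' U' s -> lgs eG U (pmap getl s) && all isl s.
Proof.
have pd : forall (V' : {set V}) a, domH V' -> domH (a |: V').
  by move=> V' a [y [yU yu]]; exists y; split => //; rewrite !inE yU orbT.
have pr : forall (V' : {set V}) a, (exists h, inr h \in V') -> exists h, inr h \in a |: V'.
  by move=> V' a [h hU]; exists h; rewrite !inE hU orbT.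
move=> U' U dh hr sub ls; apply/andP; split.
  apply: (@sim _ _ _ _ getl (fun U' U => [/\ domH U', (exists h, inr h \in U') & U \subset phi @: U']) s _ U' U (And3 dh hr sub) ls).
  move=> V' W' a _ [d1 r1 s1] st.
  have [x [Ea [w [wN wD]]]] := Q2 d1 r1 st; subst a; split.
    by move: st => /andP[xU _]; apply: BS1 s1 xU wN wD.
  split; [exact: pd | exact: pr | by rewrite imsetU1 setUS].
apply: (@lgsP_all _ _ _ (fun U' => domH U' /\ (exists h, inr h \in U')) s _ U' (conj dh hr) ls).
move=> V' a _ [d1 r1] st.
have [x [-> _]] := Q2 d1 r1 st; split => //; split; [exact: pd | exact: pr].
Qed.

Lemma SegH s : forall (U' : {set V}) (W : {set TH}),
  W \subset rpart U' -> lgs e' U' s -> lgs eH W (pmap getr s).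
Proof.
move=> U' W sub ls.
apply: (@sim _ _ _ _ getr (fun U' W => W \subset rpart U') s _ U' W sub ls).
move=> V' W' a _ s1 st; case: a st => [y|h] st /=.
  by apply: (subset_trans s1); apply/subsetP => z; rewrite !inE => ->; rewrite orbT.
split; first exact: HB s1 st.
by apply/subsetP => z; rewrite !inE => /orP[/eqP->|/(subsetP s1)]; rewrite ?eqxx // inE => ->; rewrite orbT.
Qed.


Lemma subU (A B : {set TG}) (A' B' : {set V}) : A \subset phi @: A' -> B \subset phi @: B' ->
  A :|: B \subset phi @: (A' :|: B').
Proof. by move=> h1 h2; rewrite imsetU setUSS. Qed.
Lemma sub1 (A : {set TG}) (A' : {set V}) x a : phi a = x -> A \subset phi @: A' ->
  x |: A \subset phi @: (a |: A').
Proof. by move=> <- h; rewrite imsetU1 setUS. Qed.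
Lemma sub0 (A' : {set V}) : set0 \subset phi @: A'.
Proof. exact: sub0set. Qed.
Lemma incl_getl s : [set x in pmap getl s] \subset phi @: [set x in s].
Proof.
apply/subsetP => z; rewrite inE mem_pmap => /mapP [[y|h] ys //= [->]].
by apply/imsetP; exists (inl y); rewrite ?inE.
Qed.
Lemma incl_getr s : [set x in pmap getr s] \subset rpart [set x in s].
Proof.
by apply/subsetP => z; rewrite inE mem_pmap => /mapP [[y|h] ys //= [->]]; rewrite !inE.
Qed.
Lemma rsubU (A B : {set TH}) (A' B' : {set V}) : A \subset rpart A' -> B \subset rpart B' ->
  A :|: B \subset rpart (A' :|: B').
Proof.
move=> /subsetP h1 /subsetP h2; apply/subsetP => z; rewrite !inE => /orP[/h1|/h2]; rewrite inE => ->;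
 by rewrite ?orbT.
Qed.
Lemma rsubS (A : {set TH}) (A' B' : {set V}) : A \subset rpart A' -> A' \subset B' ->
  A \subset rpart B'.
Proof.
move=> /subsetP h1 /subsetP h2; apply/subsetP => z /h1; rewrite !inE => /h2 //.
Qed.

Lemma pmap_some (T1 T2 : Type) (f : T1 -> T2) s : pmap (fun x => Some (f x)) s = map f s.
Proof. by elim: s => //= x s ->. Qed.

Lemma size_getlr s : size (pmap getl s) + size (pmap getr s) = size s.
Proof. by elim: s => //= [[y|h] s IH] /=; rewrite ?addSn ?addnS IH. Qed.

Lemma size_getl s : all isl s -> size (pmap getl s) = size s.
Proof. by elim: s => //= [[y|h] s IH] //= /IH ->. Qed.


Lemma FW s : forall (U : {set TG}) (U' : {set V}), phi @: U' \subset U ->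
  lgs eG U s -> lgs e' U' (map g s).
Proof.
move=> U U' sub ls; rewrite -pmap_some.
apply: (@sim _ _ _ _ (fun x => Some (g x)) (fun U U' => phi @: U' \subset U) s _ U U' sub ls).
move=> W W' x _ s1 st; split.
  by apply: FS s1 _; rewrite phig.
by rewrite imsetU1 phig setUS.
Qed.

Lemma HFW L : forall (W : {set TH}) (U' : {set V}), rpart U' \subset W -> ~ domH U' ->
  lgs eH W L -> lgs e' U' (map inr L).
Proof.
move=> W U' sub nd ls; rewrite -pmap_some.
apply: (@sim _ _ _ _ (fun x => Some (inr x)) (fun W U' => rpart U' \subset W /\ ~ domH U') L _ W U' (conj sub nd) ls).
move=> W1 U1 h _ [s1 n1] st; split.
  exact: HF s1 n1 st.
split.
  apply/subsetP => z; rewrite !inE => /orP[/eqP [->]|zU]; first by rewrite eqxx.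
  by rewrite (subsetP s1 z) ?orbT // inE.
by case=> y [yU yu]; apply: n1; exists y; split => //; move: yU; rewrite !inE.
Qed.


Lemma LOW a b L : lgs eG set0 (a ++ u :: b) -> u \notin D eG [set x in a] ->
  lgs eH set0 L -> lgs e' set0 (map g a ++ map inr L ++ map g b).
Proof.
move=> ls uD lL.
move: ls; rewrite /lgs lgsP_cat /= => /andP[la /andP[su lb]].
have ua : u \notin a.
  by apply: contra uD => ua; apply: (subsetP (subD _ _)); rewrite inE.
rewrite /lgs lgsP_cat; apply/andP; split.
  by apply: (FW (U := set0)) la; rewrite imset0.
rewrite lgsP_cat; apply/andP; split.
  apply: (HFW (W := set0)) lL.
    apply/subsetP => z; rewrite !inE => /mapP [x xa E].
    by move: (phig x); rewrite -E /= => ux; move: xa; rewrite -ux (negbTE ua).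
  case=> y [+ yu]; rewrite !inE => /mapP [x xa E].
  move: (phig x); rewrite -E /= => xy.
  move/negP: uD; apply; apply/bigcupP; exists x; first by rewrite inE.
  by rewrite inE -xy yu orbT.
apply: FW lb; apply/subsetP => z /imsetP [c]; rewrite !inE => /orP[/mapP [x xa ->]|/mapP [h _ ->]] ->.
  by rewrite phig xa !orbT.
by rewrite eqxx.
Qed.


Lemma UP s' : symmetric eG -> irreflexive eG -> lgs e' set0 s' ->
  size s' <= maxn (gamma_gr eG) (gamma_gr_u eG u + gamma_gr eH - 1).
Proof.
move=> sym irr ls'.
case: (boolP (has (predC isl) s')) => [hr|]; last first.
  rewrite has_predC negbK => al.
  apply: leq_trans (leq_maxl _ _).
  rewrite -(size_getl al); apply: gamma_ge.
  apply: (SegG0 al (U' := set0)) ls' => //; [by move=> a; rewrite inE | exact: sub0set].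
have [p' [x [q' [E xr np]]]] := split_first hr.
case: x xr E => [//|h1] _ E; subst s'.
have alp : all isl p' by move: np; rewrite has_predC negbK.
move: (ls'); rewrite /lgs lgsP_cat set0U /= => /andP[lp /andP[st1 lq']].
have ni : noinr [set x in p'] by move=> a; rewrite inE => /(allP alp).
have lGp : lgs eG set0 (pmap getl p').
  by apply: (SegG0 alp (U':=set0)) lp => //; [move=> a; rewrite inE | exact: sub0set].
have inc0 : [set x in pmap getl p'] \subset phi @: [set x in p'] := incl_getl p'.
have su : lstep eG [set x in pmap getl p'] u := BS0 (b := inr h1) ni inc0 st1.
have inc1 : u |: [set x in pmap getl p'] \subset phi @: (inr h1 |: [set x in p']).
  by apply: sub1.
have hr1 : exists h, inr h \in inr h1 |: [set x in p'] by exists h1; rewrite !inE eqxx.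
have lGpu : forall B, lgs eG (u |: [set x in pmap getl p']) B ->
    lgs eG set0 (pmap getl p' ++ u :: B).
  by move=> B lB; rewrite /lgs lgsP_cat set0U /=; apply/andP; split => //; apply/andP.
case: (boolP (has adj p')) => [ha|na].
  apply: leq_trans (leq_maxl _ _).
  have dh : domH (inr h1 |: [set x in p']).
    have [y yp ay] := hasP ha; case: y yp ay => [y|//] yp ay.
    by exists y; split => //; rewrite !inE yp orbT.
  have /andP[lq2 alq] := SegG2 dh hr1 inc1 lq'.
  have := gamma_ge (lGpu _ lq2).
  by rewrite !size_cat /= size_getl // size_getl.
apply: leq_trans (leq_maxr _ _).
have uD : u \notin D eG [set x in pmap getl p'].
  apply/negP => /bigcupP [z]; rewrite inE mem_pmap => /mapP [[y|h] yp //= [->]].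
  rewrite inE (eq_sym u) neqU /= => yu.
  by move/negP: na; apply; apply/hasP; exists (inl y).
have key : forall SG SH, lgs eG (u |: [set x in pmap getl p']) SG -> lgs eH set0 SH ->
    size (pmap getl p') + size SG + size SH = size (p' ++ inr h1 :: q') ->
    size (p' ++ inr h1 :: q') <= gamma_gr_u eG u + gamma_gr eH - 1.
  move=> SG SH lSG lSH Esz.
  have h1' := gamma_u_ge sym irr (lGpu _ lSG) uD.
  have h2' := gamma_ge lSH.
  rewrite size_cat /= in h1'; rewrite -Esz; move: h1' h2'.
  move: (gamma_gr_u eG u) (gamma_gr eH) (size (pmap getl p')) (size SG) (size SH).
  clear; move=> a b c d f; lia.
case: (boolP (has adj q')) => [hq|nq]; last first.
  rewrite -all_predC in nq.
  apply: (key (pmap getl q') (pmap getr (p' ++ inr h1 :: q'))).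
  - exact: SegG1 nq _ _ inc1 lq'.
  - by apply: (SegH (U' := set0)) ls'; exact: sub0set.
  - have Ep := size_getlr p'; have Eq := size_getlr q'.
    rewrite pmap_cat !size_cat /= -Ep -Eq.
    move: (size (pmap getl p')) (size (pmap getr p')) (size (pmap getl q')) (size (pmap getr q')).
    clear; move=> a b c d; lia.
have [q1 [y [q2 [Eq ay nq1]]]] := split_first hq.
case: y ay Eq => [x|//] ax Eq; subst q'.
move: (lq'); rewrite lgsP_cat /= => /andP[lq1 /andP[stx lq2]].
have aq1 : all (predC adj) q1 by rewrite all_predC.
have lG1 := SegG1 aq1 inc1 lq1.
have inc2 : (u |: [set x in pmap getl p']) :|: [set x in pmap getl q1] \subset
    phi @: ((inr h1 |: [set x in p']) :|: [set x in q1]).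
  by apply: subU => //; exact: incl_getl.
set U1' := (inr h1 |: [set x in p']) :|: [set x in q1] in inc2 stx lq2.
have dh : domH (inl x |: U1') by exists x; rewrite !inE eqxx.
have hr2 : exists h, inr h \in inl x |: U1' by exists h1; rewrite /U1' !inE eqxx !orbT.
have xU : inl x \notin U1' by case/andP: stx.
have Ep := size_getlr p'; have Eq1 := size_getlr q1; have Eq2 := size_getlr q2.
case: (Wit stx) => [[w [wN wD]]|[w [wN wD]]].
  have sx := BS1 inc2 xU wN wD.
  have inc3 : val x |: ((u |: [set x in pmap getl p']) :|: [set x in pmap getl q1]) \subset
      phi @: (inl x |: U1') by apply: sub1.
  have /andP[lG2 _] := SegG2 dh hr2 inc3 lq2.
  apply: (key (pmap getl q1 ++ val x :: pmap getl q2)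
              (pmap getr (p' ++ inr h1 :: q1 ++ inl x :: q2))).
  - rewrite /lgs lgsP_cat; apply/andP; split => //=.
    by apply/andP; split.
  - by apply: (SegH (U' := set0)) ls'; exact: sub0set.
  - rewrite !pmap_cat /= !pmap_cat /= !size_cat /= !size_cat /= -Ep -Eq1 -Eq2.
    move: (size (pmap getl p')) (size (pmap getr p')) (size (pmap getl q1)) (size (pmap getr q1)).
    move: (size (pmap getl q2)) (size (pmap getr q2)).
    clear; move=> a b c d f g; lia.
have inc3 : (u |: [set x in pmap getl p']) :|: [set x in pmap getl q1] \subset
      phi @: (inl x |: U1').
  by apply: (subset_trans inc2); apply: imsetS; apply: subsetUr.
have /andP[lG2 al2] := SegG2 dh hr2 inc3 lq2.
have E0 : p' ++ inr h1 :: q1 ++ inl x :: q2 = (p' ++ inr h1 :: q1) ++ inl x :: q2.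
  by rewrite -catA.
have lP0 : lgs e' set0 (p' ++ inr h1 :: q1).
  by move: ls'; rewrite E0 /lgs lgsP_cat => /andP[].
apply: (key (pmap getl q1 ++ pmap getl q2) (pmap getr (p' ++ inr h1 :: q1) ++ [:: w])).
- by rewrite /lgs lgsP_cat; apply/andP; split.
- rewrite /lgs lgsP_cat; apply/andP; split.
    by apply: (SegH (U' := set0)) lP0; exact: sub0set.
  rewrite /= andbT set0U; apply: (HB' (U' := U1')) wD.
  apply: rsubS (incl_getr _) _.
  apply/subsetP => z; rewrite /U1' !inE mem_cat in_cons.
  by case/orP => [->|/orP[->|->]]; rewrite ?orbT.
- have Eg2 : size (pmap getl q2) = size q2 by rewrite size_getl.
  rewrite !pmap_cat !size_cat /= !size_cat /= -Ep -Eq1 -Eq2.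
  rewrite -Eq2 in Eg2.
  move: Eg2.
  move: (size (pmap getl p')) (size (pmap getr p')) (size (pmap getl q1)) (size (pmap getr q1)).
  move: (size (pmap getl q2)) (size (pmap getr q2)).
  clear; move=> a b c d f g; lia.
Qed.

End Repl.

Theorem lemma3 (TG TH : finType) (eG : rel TG) (eH : rel TH) (u : TG) :
  symmetric eG -> irreflexive eG -> symmetric eH -> irreflexive eH ->
  0 < #|TH| ->
  gamma_gr (repl eG u eH) =
  maxn (gamma_gr eG) (gamma_gr_u eG u + gamma_gr eH - 1).
Proof.
move=> symG irrG symH irrH TH0.
case/card_gt0P: TH0 => h0 _.
apply/eqP; rewrite eqn_leq; apply/andP; split.
  apply: gamma_le => s'; rewrite legal_dom_lgs => /andP[ls' _].
  exact: UP.
rewrite geq_max; apply/andP; split.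
  apply: gamma_le => s; rewrite legal_dom_lgs => /andP[ls _].
  rewrite -(size_map (g u h0)); apply: gamma_ge.
  by apply: (FW eH h0 (U := set0)) ls; rewrite imset0.
set G' := gamma_gr (repl eG u eH).
have low : forall a b L, lgs eG set0 (a ++ u :: b) -> u \notin D eG [set x in a] ->
    lgs eH set0 L -> size (a ++ u :: b) + size L <= G' + 1.
  move=> a b L la uD lL; have := gamma_ge (LOW h0 la uD lL).
  rewrite !size_cat !size_map /=; rewrite -/G'.
  move: (size a) (size b) (size L) G'; clear; move=> x y z w; lia.
clearbody G'.
have D0 : D eG [set x in [::]] = set0.
  by apply/setP => z; rewrite inE; apply/negP => /bigcupP [? ]; rewrite inE.
have l1 : lgs eG set0 ([::] ++ u :: [::]).
  rewrite /lgs /= andbT /lstep inE /=; apply/subsetPn; exists u; first exact: cnbhd_refl.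
  by apply/negP => /bigcupP [?]; rewrite inE.
have u1 : u \notin D eG [set x in [::]] by rewrite D0 inE.
have gH : gamma_gr eH <= G'.
  apply: gamma_le => L; rewrite legal_dom_lgs => /andP[lL _].
  have := low _ _ L l1 u1 lL; rewrite /= => H; clear -H; lia.
have gU : gamma_gr_u eG u <= G' + 1 - gamma_gr eH.
  apply: gamma_u_le => a b la uD.
  have : gamma_gr eH <= G' + 1 - size (a ++ u :: b).
    apply: gamma_le => L; rewrite legal_dom_lgs => /andP[lL _].
    have := low a b L la uD lL => H; clear -H; lia.
  have := low a b [::] la uD isT; rewrite addn0 => H2 H; clear -H H2; lia.
clear -gU gH; lia.
Qed.
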